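(* Let $a\ge 2$ and $n_1,n_2\ge1$. Let $M_{n_1}\in\mathrm{Sym}_{n_1}(\mathbb{Z})$ and $M'_{n_2}\in\mathrm{Sym}_{n_2}(\mathbb{Z})$ be fixed with $\mathrm{Cok}_*^{(a)}(M_{n_1}\bmod a)\simeq\mathrm{Cok}_*^{(a)}(M'_{n_2}\bmod a)$. Let $z,\xi_1,\xi_2,\ldots$ be independent and uniformly distributed in $\{0,1,\ldots,a-1\}$. Then the equivalence classes $$\mathrm{Cok}_*^{(a)}\left(\begin{pmatrix}M_{n_1}&\boldsymbol{\xi}_1\\\boldsymbol{\xi}_1^T&z\end{pmatrix}\bmod a\right)\quad\text{and}\quad\mathrm{Cok}_*^{(a)}\left(\begin{pmatrix}M'_{n_2}&\boldsymbol{\xi}_2\\\boldsymbol{\xi}_2^T&z\end{pmatrix}\bmod a\right)$$ have the same distribution, where $\boldsymbol{\xi}_1=(\xi_1,\ldots,\xi_{n_1})^T$ and $\boldsymbol{\xi}_2=(\xi_1,\ldots,\xi_{n_2})^T$.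
   Context: Cokernel with quasi-pairing: for a prime power $p^e$ and $H_{n_1}\in\mathrm{Sym}_{n_1}(\mathbb{Z}/p^e\mathbb{Z})$, $H'_{n_2}\in\mathrm{Sym}_{n_2}(\mathbb{Z}/p^e\mathbb{Z})$, write $\mathrm{Cok}_*^{(p^e)}(H_{n_1})\simeq\mathrm{Cok}_*^{(p^e)}(H'_{n_2})$ if there exist $n\ge\max\{n_1,n_2\}$ and invertible symmetric $H^c\in\mathrm{Sym}_{n-n_1}(\mathbb{Z}/p^e\mathbb{Z})\cap\mathrm{GL}_{n-n_1}(\mathbb{Z}/p^e\mathbb{Z})$, $H'^c\in\mathrm{Sym}_{n-n_2}(\mathbb{Z}/p^e\mathbb{Z})\cap\mathrm{GL}_{n-n_2}(\mathbb{Z}/p^e\mathbb{Z})$ such that $\mathrm{diag}(H^c,H_{n_1})=U\,\mathrm{diag}(H'^c,H'_{n_2})\,U^T$ for some $U\in\mathrm{GL}_n(\mathbb{Z}/p^e\mathbb{Z})$. This is an equivalence relation; $\mathrm{Cok}_*^{(p^e)}(H)$ denotes the class of $H$. For $a=p_1^{e_1}\cdots p_l^{e_l}$ and symmetric matrices $H,H'$ over $\mathbb{Z}/a\mathbb{Z}$, $\mathrm{Cok}_*^{(a)}(H)\simeq\mathrm{Cok}_*^{(a)}(H')$ means $\mathrm{Cok}_*^{(p_i^{e_i})}(H\bmod p_i^{e_i})\simeq\mathrm{Cok}_*^{(p_i^{e_i})}(H'\bmod p_i^{e_i})$ for all $i$. $\bmod a$ denotes entrywise reduction. *)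

(* Defs.v *)
From Stdlib Require Import ClassicalDescription.
From HB Require Import structures.
From mathcomp Require Import all_boot all_order all_algebra.
Set Implicit Arguments. Unset Strict Implicit. Unset Printing Implicit Defensive.
Import Order.TTheory GRing.Theory Num.Theory.
Local Open Scope ring_scope.

Definition pb (P : Prop) : bool :=
  if excluded_middle_informative P then true else false.

Definition symmx {R : Type} {n : nat} (A : 'M[R]_n) : Prop := A^T = A.

(* Cok_*^{(q)}(H) ~ Cok_*^{(q)}(H') for matrices over Z/qZ (q a prime power):
   there exist invertible symmetric Hc (size k1), Hc' (size k2) with
   k1 + n1 = k2 + n2 =: n and U in GL_n with
   diag(Hc, H) = U diag(Hc', H') U^T. *)
Definition cokEquivPP (q : nat) (n1 n2 : nat)
    (H : 'M['Z_q]_n1) (H' : 'M['Z_q]_n2) : Prop :=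
  exists (k1 k2 : nat) (e : (k2 + n2 = k1 + n1)%N)
         (Hc : 'M['Z_q]_k1) (Hc' : 'M['Z_q]_k2) (U : 'M['Z_q]_(k1 + n1)),
    [/\ symmx Hc /\ Hc \in unitmx, symmx Hc' /\ Hc' \in unitmx,
        U \in unitmx &
        block_mx Hc 0 0 H =
          U *m castmx (e, e) (block_mx Hc' 0 0 H') *m U^T].

Definition redZ (a q : nat) (m n : nat) (A : 'M['Z_a]_(m, n)) : 'M['Z_q]_(m, n) :=
  map_mx (fun x : 'Z_a => ((val x)%:R : 'Z_q)) A.

Definition redI (a : nat) (m n : nat) (A : 'M[int]_(m, n)) : 'M['Z_a]_(m, n) :=
  map_mx (fun x : int => (x%:~R : 'Z_a)) A.

(* Cok_*^{(a)}(H) ~ Cok_*^{(a)}(H'): equivalence modulo every prime power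
   p^e exactly dividing a. *)
Definition cokEquiv (a : nat) (n1 n2 : nat)
    (H : 'M['Z_a]_n1) (H' : 'M['Z_a]_n2) : Prop :=
  forall p : nat, p \in primes a ->
    cokEquivPP (redZ (p ^ logn p a) H) (redZ (p ^ logn p a) H').

(* The bordered matrix [[M, xi],[xi^T, z]] mod a, with xi = (xi_1..xi_n)
   taken as the first n coordinates of the sample vector. *)
Definition bordered (a n N : nat) (le_nN : (n <= N)%N) (M : 'M[int]_n)
    (z : 'I_a) (xi : {ffun 'I_N -> 'I_a}) : 'M['Z_a]_(n + 1) :=
  let v : 'cV['Z_a]_n := \col_i ((val (xi (widen_ord le_nN i)))%:R) in
  block_mx (redI a M) v v^T ((val z)%:R)%:M.

(* Main.v *)
Require Import Defs.
From mathcomp Require Import all_boot all_order all_algebra.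
From Stdlib Require Import ClassicalDescription.
From mathcomp Require Import zify ring.
Set Implicit Arguments. Unset Strict Implicit. Unset Printing Implicit Defensive.
Import Order.TTheory GRing.Theory Num.Theory.
Local Open Scope ring_scope.


Section Cong.
Variable R : comUnitRingType.

Definition dg m n (A : 'M[R]_m) (B : 'M[R]_n) : 'M[R]_(m + n) := block_mx A 0 0 B.

Definition cong m n (X : 'M[R]_m) (Y : 'M[R]_n) :=
  exists (U : 'M[R]_(m, n)) (V : 'M[R]_(n, m)),
    [/\ U *m V = 1%:M, V *m U = 1%:M & X = U *m Y *m U^T].

Lemma cong_refl n (X : 'M[R]_n) : cong X X.
Proof. by exists 1%:M, 1%:M; rewrite mulmx1 mul1mx trmx1 mulmx1. Qed.

Lemma cong_sym m n (X : 'M[R]_m) (Y : 'M[R]_n) : cong X Y -> cong Y X.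
Proof.
move=> [U [V [UV VU ->]]]; exists V, U; split => //.
by rewrite !mulmxA VU mul1mx -mulmxA -trmx_mul VU trmx1 mulmx1.
Qed.

Lemma cong_trans m n p (X : 'M[R]_m) (Y : 'M[R]_n) (Z : 'M[R]_p) :
  cong X Y -> cong Y Z -> cong X Z.
Proof.
move=> [U [V [UV VU ->]]] [U2 [V2 [UV2 VU2 ->]]].
exists (U *m U2), (V2 *m V); split.
- by rewrite mulmxA -(mulmxA U) UV2 mulmx1 UV.
- by rewrite mulmxA -(mulmxA V2) VU mulmx1 VU2.
by rewrite trmx_mul !mulmxA.
Qed.

Lemma mul_dg m1 m2 n1 n2 p1 p2 (A : 'M[R]_(m1, n1)) (B : 'M[R]_(m2, n2))
  (C : 'M[R]_(n1, p1)) (D : 'M[R]_(n2, p2)) :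
  block_mx A 0 0 B *m block_mx C 0 0 D = block_mx (A *m C) 0 0 (B *m D).
Proof. by rewrite mulmx_block !mulmx0 !mul0mx !addr0 !add0r. Qed.

Lemma tr_dg m1 m2 n1 n2 (A : 'M[R]_(m1, n1)) (B : 'M[R]_(m2, n2)) :
  (block_mx A 0 0 B)^T = block_mx A^T 0 0 B^T.
Proof. by rewrite tr_block_mx !trmx0. Qed.

Lemma cong_dg m1 m2 n1 n2 (A : 'M[R]_m1) (B : 'M[R]_m2) (A' : 'M[R]_n1) (B' : 'M[R]_n2) :
  cong A A' -> cong B B' -> cong (dg A B) (dg A' B').
Proof.
move=> [U [V [UV VU ->]]] [U2 [V2 [UV2 VU2 ->]]].
exists (block_mx U 0 0 U2), (block_mx V 0 0 V2); split.
- by rewrite mul_dg UV UV2 -scalar_mx_block.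
- by rewrite mul_dg VU VU2 -scalar_mx_block.
by rewrite /dg tr_dg !mul_dg.
Qed.

Definition cI m m' (e : m = m') : 'M[R]_(m', m) := castmx (e, erefl m) 1%:M.

Lemma cI_props m m' (e : m = m') (A : 'M[R]_m) :
  [/\ cI e *m (cI e)^T = 1%:M, (cI e)^T *m cI e = 1%:M &
      castmx (e, e) A = cI e *m A *m (cI e)^T].
Proof. by case: m' / e; rewrite /cI !castmx_id trmx1 !mulmx1 mul1mx. Qed.

Lemma cong_cast m m' (e : m = m') (A : 'M[R]_m) : cong (castmx (e, e) A) A.
Proof.
have [h1 h2 h3] := cI_props e A.
by exists (cI e), (cI e)^T; split.
Qed.

Lemma cong_assoc a b c (A : 'M[R]_a) (B : 'M[R]_b) (C : 'M[R]_c) :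
  cong (dg (dg A B) C) (dg A (dg B C)).
Proof.
have := block_mxA (A11 := A) (A12 := 0) (A13 := 0) (A21 := 0) (A22 := B) (A23 := 0)
  (A31 := 0) (A32 := 0) (A33 := C).
rewrite /= !row_mx0 !col_mx0 => H.
apply: cong_sym; rewrite /dg H; exact: cong_cast.
Qed.

Lemma cong_swap a b (A : 'M[R]_a) (B : 'M[R]_b) : cong (dg A B) (dg B A).
Proof.
pose S : 'M[R]_(a + b, b + a) := block_mx 0 1%:M 1%:M 0.
pose S' : 'M[R]_(b + a, a + b) := block_mx 0 1%:M 1%:M 0.
exists S, S'; split.
- by rewrite /S /S' mulmx_block !mulmx0 !mul0mx !mulmx1 !addr0 !add0r -scalar_mx_block.
- by rewrite /S /S' mulmx_block !mulmx0 !mul0mx !mulmx1 !addr0 !add0r -scalar_mx_block.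
rewrite /S /dg tr_block_mx !trmx0 !trmx1 !mulmx_block.
by rewrite !mulmx0 !mul0mx !mulmx1 !mul1mx !addr0 !add0r.
Qed.

Lemma dg0 n (C : 'M[R]_0) (X : 'M[R]_n) : dg C X = X.
Proof.
apply/matrixP => i j.
have -> : i = rshift 0 i by apply: val_inj.
have -> : j = rshift 0 j by apply: val_inj.
by rewrite /dg block_mxEdr; congr (X _ _); apply: val_inj.
Qed.

Definition symunit k (C : 'M[R]_k) := C^T = C /\ C \in unitmx.

Lemma symunit_dg a b (A : 'M[R]_a) (B : 'M[R]_b) :
  symunit A -> symunit B -> symunit (dg A B).
Proof.
move=> [sA uA] [sB uB]; split; first by rewrite /dg tr_dg sA sB.
by rewrite unitmxE /dg det_ublock unitrM -!unitmxE uA uB.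
Qed.

Definition Rel n1 n2 (X : 'M[R]_n1) (Y : 'M[R]_n2) :=
  exists k1 k2 (C1 : 'M[R]_k1) (C2 : 'M[R]_k2),
    [/\ (k2 + n2 = k1 + n1)%N, symunit C1, symunit C2 & cong (dg C1 X) (dg C2 Y)].

Lemma Rel_sym n1 n2 (X : 'M[R]_n1) (Y : 'M[R]_n2) : Rel X Y -> Rel Y X.
Proof.
move=> [k1 [k2 [C1 [C2 [e s1 s2 c]]]]].
by exists k2, k1, C2, C1; split => //; apply: cong_sym.
Qed.

Lemma Rel_trans n1 n2 n3 (X : 'M[R]_n1) (Y : 'M[R]_n2) (Z : 'M[R]_n3) :
  Rel X Y -> Rel Y Z -> Rel X Z.
Proof.
move=> [k1 [k2 [C1 [C2 [e s1 s2 c]]]]] [j1 [j2 [D1 [D2 [e' t1 t2 c']]]]].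
exists (j1 + k1)%N, (k2 + j2)%N, (dg D1 C1), (dg C2 D2); split.
- rewrite -addnA e' addnCA e; lia.
- exact: symunit_dg.
- exact: symunit_dg.
apply: cong_trans (cong_assoc _ _ _) _.
apply: cong_trans (cong_dg (cong_refl D1) c) _.
apply: cong_trans (cong_sym (cong_assoc _ _ _)) _.
apply: cong_trans (cong_dg (cong_swap D1 C2) (cong_refl Y)) _.
apply: cong_trans (cong_assoc _ _ _) _.
apply: cong_trans (cong_dg (cong_refl C2) c') _.
exact: cong_sym (cong_assoc _ _ _).
Qed.

Lemma Rel_cong n1 n2 (X : 'M[R]_n1) (Y : 'M[R]_n2) :
  n2 = n1 -> cong X Y -> Rel X Y.
Proof.
move=> e c; exists 0%N, 0%N, 0, 0; split => //.
- by split; [rewrite trmx0 | rewrite unitmxE det_mx00 unitr1].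
- by split; [rewrite trmx0 | rewrite unitmxE det_mx00 unitr1].
by rewrite !dg0.
Qed.

Lemma Rel_strip k n (C : 'M[R]_k) (X : 'M[R]_n) : symunit C -> Rel (dg C X) X.
Proof.
move=> sC; exists 0%N, k, 0, C; split => //.
- by split; [rewrite trmx0 | rewrite unitmxE det_mx00 unitr1].
rewrite dg0; exact: cong_refl.
Qed.

End Cong.


Section Bord.
Variable R : comUnitRingType.

Definition Bd n (X : 'M[R]_n) (v : 'cV[R]_n) (z : R) : 'M[R]_(n + 1) :=
  block_mx X v v^T z%:M.

Lemma cong_Bd m n (X : 'M[R]_m) (Y : 'M[R]_n) U V (w : 'cV[R]_n) z :
  U *m V = 1%:M -> V *m U = 1%:M -> X = U *m Y *m U^T ->
  cong (Bd X (U *m w) z) (Bd Y w z).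
Proof.
move=> UV VU eX; exists (block_mx U 0 0 1%:M), (block_mx V 0 0 1%:M); split.
- by rewrite mul_dg UV mul1mx -scalar_mx_block.
- by rewrite mul_dg VU mul1mx -scalar_mx_block.
rewrite /Bd tr_dg trmx1 !mulmx_block !mulmx0 !mul0mx !addr0 !add0r !mul1mx !mulmx1.
by rewrite eX trmx_mul.
Qed.

Lemma cong_Bd_dg k n (C : 'M[R]_k) (X : 'M[R]_n) (u : 'cV[R]_k) (v : 'cV[R]_n) z :
  symunit C ->
  cong (Bd (dg C X) (col_mx u v) (z + (u^T *m invmx C *m u) 0 0))
       (dg C (Bd X v z)).
Proof.
move=> [sC uC].
set zz := z + _.
have H := block_mxA (A11 := C) (A12 := 0) (A13 := u) (A21 := 0) (A22 := X) (A23 := v)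
  (A31 := u^T) (A32 := v^T) (A33 := zz%:M).
simpl in H.
have E : Bd (dg C X) (col_mx u v) zz =
   block_mx (block_mx C 0 0 X) (col_mx u v) (row_mx u^T v^T) zz%:M.
  by rewrite /Bd /dg tr_col_mx.
rewrite E; apply: cong_trans (cong_sym (cong_cast (esym (addnA k n 1)) _)) _.
rewrite -H.
pose G : 'M[R]_(n + 1, k) := col_mx 0 (u^T *m invmx C).
exists (block_mx 1%:M 0 G 1%:M), (block_mx 1%:M 0 (- G) 1%:M); split.
- rewrite mulmx_block !mulmx0 !mul0mx !mulmx1 !mul1mx !addr0 !add0r addrN.
  by rewrite -scalar_mx_block.
- rewrite mulmx_block !mulmx0 !mul0mx !mulmx1 !mul1mx !addr0 !add0r addNr.
  by rewrite -scalar_mx_block.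
rewrite /dg tr_block_mx trmx0 trmx1 !mulmx_block !mulmx0 !mul0mx !mulmx1 !mul1mx.
rewrite !addr0 !add0r.
have GC : G *m C = col_mx 0 u^T.
  by rewrite /G mul_col_mx mul0mx -mulmxA mulVmx // mulmx1.
have CG : C *m G^T = row_mx 0 u.
  rewrite /G tr_col_mx trmx0 mul_mx_row mulmx0 trmx_mul trmxK trmx_inv sC.
  by rewrite mulmxA mulmxV // mul1mx.
rewrite ?trmx1 ?mulmx1 ?mul0mx ?addr0 GC CG /G tr_col_mx trmx0 mul_col_row !mulmx0 !mul0mx.
rewrite /Bd add_block_mx !add0r.
congr block_mx.
rewrite trmx_mul trmxK trmx_inv sC mulmxA.
by rewrite /zz raddfD /= -mx11_scalar addrC.
Qed.

End Bord.


Lemma pb_eq (P Q : Prop) : (P <-> Q) -> pb P = pb Q.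
Proof.
move=> PQ; rewrite /pb; case: excluded_middle_informative => p;
  case: excluded_middle_informative => q //; exfalso.
- by apply: q; apply/PQ.
- by apply: p; apply/PQ.
Qed.

Lemma pbP (P : Prop) : reflect P (pb P).
Proof. by rewrite /pb; case: excluded_middle_informative => p; constructor. Qed.

Lemma card_bij (A B : finType) (g : A -> B) (h : B -> A) :
  cancel g h -> cancel h g -> forall (P : pred B),
  #|[set a | P (g a)]| = #|[set b | P b]|.
Proof.
move=> gK hK P.
have bij : bijective g by exists h.
rewrite -(on_card_preimset (onW_bij _ bij)); apply: eq_card => a.
by rewrite !inE.
Qed.

Lemma card_snd (A B : finType) (Q : pred B) :
  #|[set x : A * B | Q x.2]| = (#|A| * #|[set y | Q y]|)%N.
Proof.
have -> : [set x : A * B | Q x.2] = setX [set: A] [set y | Q y].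
  by apply/setP => -[x y]; rewrite !inE.
by rewrite cardsX cardsT.
Qed.

Section Count.
Variable R : finComUnitRingType.

Definition fc n m (X : 'M[R]_n) (T : 'M[R]_m) :=
  #|[set s : R * 'cV[R]_n | pb (Rel (Bd X s.2 s.1) T)]|.

Lemma Rel_iff n1 n2 m (X : 'M[R]_n1) (Y : 'M[R]_n2) (T : 'M[R]_m) :
  Rel X Y -> (Rel X T <-> Rel Y T).
Proof.
move=> r; split => h; first exact: Rel_trans (Rel_sym r) h.
exact: Rel_trans r h.
Qed.

Lemma fc_dg k n m (C : 'M[R]_k) (X : 'M[R]_n) (T : 'M[R]_m) :
  symunit C -> fc (dg C X) T = (#|R| ^ k * fc X T)%N.
Proof.
move=> sC.
pose sq (u : 'cV[R]_k) := (u^T *m invmx C *m u) 0 0.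
pose g (s : R * 'cV[R]_(k + n)) : 'cV[R]_k * (R * 'cV[R]_n) :=
  (usubmx s.2, (s.1 - sq (usubmx s.2), dsubmx s.2)).
pose h (t : 'cV[R]_k * (R * 'cV[R]_n)) : R * 'cV[R]_(k + n) :=
  (t.2.1 + sq t.1, col_mx t.1 t.2.2).
have gK : cancel g h by move=> [z w]; rewrite /g /h /= subrK vsubmxK.
have hK : cancel h g by move=> [u [z v]]; rewrite /g /h /= col_mxKu col_mxKd addrK.
rewrite /fc -(card_bij hK gK) /=.
have -> : [set a | pb (Rel (Bd (dg C X) (h a).2 (h a).1) T)] =
          [set a : 'cV[R]_k * (R * 'cV[R]_n) | pb (Rel (Bd X a.2.2 a.2.1) T)].
  apply/setP => -[u [z v]]; rewrite !inE /h /=.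
  apply: pb_eq; apply: Rel_iff.
  apply: Rel_trans (Rel_strip _ sC).
  apply: Rel_cong; first by rewrite addnA.
  exact: cong_Bd_dg.
rewrite (@card_snd _ _ (fun y : R * 'cV[R]_n => pb (Rel (Bd X y.2 y.1) T))).
by rewrite card_mx muln1.
Qed.

Lemma fc_cong n1 n2 m (X : 'M[R]_n1) (Y : 'M[R]_n2) (T : 'M[R]_m) :
  n2 = n1 -> cong X Y -> fc X T = fc Y T.
Proof.
move=> e [U [V [UV VU eX]]].
pose g (s : R * 'cV[R]_n2) : R * 'cV[R]_n1 := (s.1, U *m s.2).
pose h (s : R * 'cV[R]_n1) : R * 'cV[R]_n2 := (s.1, V *m s.2).
have gK : cancel g h by move=> [z w]; rewrite /g /h /= mulmxA VU mul1mx.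
have hK : cancel h g by move=> [z w]; rewrite /g /h /= mulmxA UV mul1mx.
rewrite /fc -(card_bij gK hK) /=.
apply: eq_card => -[z w]; rewrite !inE /g /=.
apply: pb_eq; apply: Rel_iff.
apply: Rel_cong; first by rewrite e.
exact: (cong_Bd _ _ UV VU eX).
Qed.

Definition topv N n (le : (n <= N)%N) (w : 'cV[R]_N) : 'cV[R]_n :=
  \col_i w (widen_ord le i) 0.

Lemma fc_top_gen N n r (le : (n <= N)%N) (e : N = (n + r)%N) m
   (X : 'M[R]_n) (T : 'M[R]_m) :
  #|[set s : R * 'cV[R]_N | pb (Rel (Bd X (topv le s.2) s.1) T)]|
  = (#|R| ^ r * fc X T)%N.
Proof.
subst N.
pose g (s : R * 'cV[R]_(n + r)) : 'cV[R]_r * (R * 'cV[R]_n) :=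
  (dsubmx s.2, (s.1, usubmx s.2)).
pose h (t : 'cV[R]_r * (R * 'cV[R]_n)) : R * 'cV[R]_(n + r) :=
  (t.2.1, col_mx t.2.2 t.1).
have gK : cancel g h by move=> [z w]; rewrite /g /h /= vsubmxK.
have hK : cancel h g by move=> [u [z v]]; rewrite /g /h /= col_mxKu col_mxKd.
rewrite -(card_bij hK gK) /=.
have -> : [set a | pb (Rel (Bd X (topv le (h a).2) (h a).1) T)] =
          [set a : 'cV[R]_r * (R * 'cV[R]_n) | pb (Rel (Bd X a.2.2 a.2.1) T)].
  apply/setP => -[u [z v]]; rewrite !inE /h /=.
  have -> : topv le (col_mx v u) = v.
    apply/matrixP => i j; rewrite /topv mxE (ord1 j).
    have -> : widen_ord le i = lshift r i by apply: val_inj.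
    by rewrite col_mxEu.
  by [].
rewrite (@card_snd _ _ (fun y : R * 'cV[R]_n => pb (Rel (Bd X y.2 y.1) T))).
by rewrite card_mx muln1.
Qed.

Lemma count_prime n1 n2 N m (X : 'M[R]_n1) (Y : 'M[R]_n2) (T : 'M[R]_m)
  (le1 : (n1 <= N)%N) (le2 : (n2 <= N)%N) :
  Rel X Y ->
  #|[set s : R * 'cV[R]_N | pb (Rel (Bd X (topv le1 s.2) s.1) T)]|
  = #|[set s : R * 'cV[R]_N | pb (Rel (Bd Y (topv le2 s.2) s.1) T)]|.
Proof.
move=> [k1 [k2 [C1 [C2 [e s1 s2 c]]]]].
rewrite (fc_top_gen le1 (esym (subnKC le1))) (fc_top_gen le2 (esym (subnKC le2))).
have H : (#|R| ^ k1 * fc X T = #|R| ^ k2 * fc Y T)%N.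
  by rewrite -(fc_dg X T s1) -(fc_dg Y T s2) (fc_cong _ e c).
set c0 := #|R|.
have c0p : (0 < c0)%N by apply/card_gt0P; exists 0.
apply/eqP; rewrite -(@eqn_pmul2r (c0 ^ (k1 + n1))%N _ _ (ltac:(by rewrite expn_gt0 c0p))) -[X in _ == (_ * c0 ^ X)%N]e.
apply/eqP.
rewrite [in LHS]expnD [in RHS]expnD.
have E1 : (c0 ^ (N - n1) * fc X T * (c0 ^ k1 * c0 ^ n1) = c0 ^ N * (c0 ^ k1 * fc X T))%N.
  rewrite -{2}(subnK le1) expnD; ring.
have E2 : (c0 ^ (N - n2) * fc Y T * (c0 ^ k2 * c0 ^ n2) = c0 ^ N * (c0 ^ k2 * fc Y T))%N.
  rewrite -{2}(subnK le2) expnD; ring.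
by rewrite E1 E2 H.
Qed.

End Count.


Section Bijc.
Variables (T : finType) (P Q : pred T).
Definition bijc (x : T) : T :=
  if P x then nth x (enum Q) (index x (enum P))
  else nth x (enum (predC Q)) (index x (enum (predC P))).

Hypothesis cPQ : #|P| = #|Q|.

Lemma cPQC : #|predC P| = #|predC Q|.
Proof.
have h1 := cardC P; have h2 := cardC Q.
have : (#|P| + #|[predC P]| = #|Q| + #|[predC Q]|)%N by rewrite h1 h2.
by rewrite cPQ => /addnI.
Qed.

Lemma bijc_in_P x : P x -> (index x (enum P) < size (enum Q))%N.
Proof. by move=> Px; rewrite -cardE -cPQ cardE index_mem mem_enum. Qed.

Lemma bijc_in_C x : ~~ P x -> (index x (enum (predC P)) < size (enum (predC Q)))%N.
Proof. by move=> Px; rewrite -cardE -cPQC cardE index_mem mem_enum inE. Qed.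

Lemma bijc_pred x : Q (bijc x) = P x.
Proof.
rewrite /bijc; case: ifP => Px.
- have := mem_nth x (bijc_in_P Px); by rewrite mem_enum.
- have := mem_nth x (bijc_in_C (negbT Px)); rewrite mem_enum inE.
  by move/negbTE.
Qed.

Lemma bijc_inj : injective bijc.
Proof.
move=> x y.
case Px: (P x); case Py: (P y); move=> E.
- move: E; rewrite /bijc Px Py.
  rewrite (set_nth_default x y (bijc_in_P Py)) => /eqP.
  rewrite nth_uniq ?enum_uniq ?bijc_in_P // => /eqP.
  move/(congr1 (fun i => nth x (enum P) i)).
  by rewrite !nth_index ?mem_enum.
- by have := bijc_pred x; have := bijc_pred y; rewrite E Px Py => ->.
- by have := bijc_pred x; have := bijc_pred y; rewrite E Px Py => ->.
- move: E; rewrite /bijc Px Py.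
  rewrite (set_nth_default x y (bijc_in_C (negbT Py))) => /eqP.
  rewrite nth_uniq ?enum_uniq ?bijc_in_C ?Px ?Py // => /eqP.
  move/(congr1 (fun i => nth x (enum (predC P)) i)).
  by rewrite !nth_index ?mem_enum ?inE ?Px ?Py.
Qed.
End Bijc.

Lemma ZpnatE q m n : (1 < q)%N -> ((m%:R : 'Z_q) = n%:R <-> m = n %[mod q]).
Proof.
move=> q1; split => h.
- by move/(congr1 val): h; rewrite /= !val_Zp_nat.
- by apply: val_inj; rewrite /= !val_Zp_nat.
Qed.

Lemma Zp_valK q (y : 'Z_q) : ((val y)%:R : 'Z_q) = y.
Proof. exact: natr_Zp. Qed.

Lemma redZ_natr a q n : (1 < a)%N -> (1 < q)%N -> (q %| a)%N ->
  ((val (n%:R : 'Z_a))%:R : 'Z_q) = n%:R.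
Proof.
move=> a1 q1 qa; apply/ZpnatE => //; rewrite -[in RHS](modn_dvdm n qa).
congr (_ %% q)%N; exact: val_Zp_nat.
Qed.

Section CRT.
Variable a : nat.
Hypothesis a1 : (1 < a)%N.

Definition ep p := chinese a`_p a`_p^' 1 0.

Lemma ep_self p : p \in primes a -> ((ep p)%:R : 'Z_(a`_p)) = 1.
Proof.
move=> pa; have q1 : (1 < a`_p)%N by rewrite p_part_gt1.
have -> : (1 : 'Z_(a`_p)) = 1%N%:R by [].
apply/ZpnatE => //; exact: chinese_modl (coprime_partC _ _ _) _ _.
Qed.

Lemma ep_other p p' : p \in primes a -> p' \in primes a -> p' != p ->
  ((ep p)%:R : 'Z_(a`_p')) = 0.
Proof.
move=> pa pa' np; have q1 : (1 < a`_p')%N by rewrite p_part_gt1.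
have -> : (0 : 'Z_(a`_p')) = 0%N%:R by [].
apply/ZpnatE => //.
have d : (a`_p' %| a`_p^')%N.
  rewrite -(@partn_part p' p^' a); first exact: dvdn_part.
  by move=> x; rewrite !inE => /eqP ->.
rewrite -(modn_dvdm _ d) /ep.
rewrite (chinese_modr (coprime_partC _ _ _)).
by rewrite !mod0n.
Qed.

Definition crt (y : forall p : nat, 'Z_(a`_p)) : 'I_a :=
  Ordinal (ltn_pmod (\sum_(p <- primes a) ep p * val (y p)) (ltnW a1)).

Lemma crtE (y : forall p : nat, 'Z_(a`_p)) p : p \in primes a ->
  ((val (crt y))%:R : 'Z_(a`_p)) = y p.
Proof.
move=> pa; have q1 : (1 < a`_p)%N by rewrite p_part_gt1.
rewrite /crt /=.
have -> : (((\sum_(p0 <- primes a) ep p0 * val (y p0)) %% a)%:R : 'Z_(a`_p)) =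
          (\sum_(p0 <- primes a) ep p0 * val (y p0))%:R.
  apply/ZpnatE => //; rewrite modn_dvdm //; exact: dvdn_part.
rewrite natr_sum (bigD1_seq p) //= ?primes_uniq //.
rewrite big_seq_cond big1 ?addr0.
  by rewrite natrM ep_self // Zp_valK mul1r.
move=> p' /andP [pa' np]; rewrite natrM ep_other //.  2:by rewrite eq_sym. exact: mul0r.
Qed.

Lemma crt_uniq x y : (x < a)%N -> (y < a)%N ->
  (forall p, p \in primes a -> x = y %[mod a`_p]) -> x = y.
Proof.
wlog le : x y / (x <= y)%N.
  move=> H xa ya h; case: (leqP x y) => l; first exact: H.
  by apply/esym/H => // [|p /h ->]; [exact: ltnW|].
move=> xa ya h.
have d : (a %| y - x)%N.
  apply/dvdn_partP; first lia.
  move=> p pa; rewrite -eqn_mod_dvd //; apply/eqP/esym; exact: h.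
have : (y - x < a)%N by lia.
case E: (y - x)%N => [|k] l; first lia.
rewrite E in d; have := dvdn_leq (ltn0Sn k) d; lia.
Qed.

End CRT.


Lemma cokPP_Rel q n1 n2 (H : 'M['Z_q]_n1) (H' : 'M['Z_q]_n2) :
  cokEquivPP H H' <-> Rel H H'.
Proof.
split.
- move=> [k1 [k2 [e [Hc [Hc' [U [[s1 u1] [s2 u2] uU E]]]]]]].
  exists k1, k2, Hc, Hc'; split => //.
  apply: cong_trans (cong_cast e _).
  exists U, (invmx U); split; [exact: mulmxV | exact: mulVmx | exact: E].
- move=> [k1 [k2 [C1 [C2 [e s1 s2 [U [V [UV VU E]]]]]]]].
  have [h1 h2 h3] := cI_props e (dg C2 H').
  exists k1, k2, e, C1, C2, (U *m (cI _ e)^T); split => //.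
  + apply: (proj1 (mulmx1_unit (B := cI _ e *m V) _)).
    by rewrite mulmxA -(mulmxA U) h2 mulmx1 UV.
  + rewrite h3 trmx_mul trmxK.
    rewrite !mulmxA -(mulmxA U) h2 mulmx1 -(mulmxA _ (cI _ e)^T) h2 mulmx1.
    exact: E.
Qed.

Lemma card_inj_pre (T : finType) (f : T -> T) (P : pred T) :
  injective f -> #|[pred x | P (f x)]| = #|[pred x | P x]|.
Proof.
move=> finj; have [g fK gK] := injF_bij finj.
have := card_bij fK gK P.
have E1 : #|[set a | P (f a)]| = #|[pred x | P (f x)]| by apply: eq_card => x; rewrite inE.
have E2 : #|[set a | P a]| = #|[pred x | P x]| by apply: eq_card => x; rewrite inE.
by rewrite E1 E2.
Qed.


Lemma conv_prime a p n m (X : 'M['Z_a]_n) (T : 'M['Z_a]_m) :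
  cokEquivPP (redZ (p ^ logn p a) X) (redZ (p ^ logn p a) T) <->
  Rel (redZ (a`_p) X) (redZ (a`_p) T).
Proof. rewrite -(p_part p a); exact: cokPP_Rel. Qed.

Lemma red_bordered a q n N (le : (n <= N)%N) (M : 'M[int]_n) (z : 'I_a)
  (xi : {ffun 'I_N -> 'I_a}) :
  (1 < a)%N -> (1 < q)%N -> (q %| a)%N ->
  redZ q (bordered le M z xi) =
  Bd (redZ q (redI a M)) (topv le (\col_(i < N) ((val (xi i))%:R : 'Z_q)))
     ((val z)%:R).
Proof.
move=> a1 q1 qa.
rewrite /bordered /redZ /Bd map_block_mx.
have Ev : map_mx (fun x : 'Z_a => ((val x)%:R : 'Z_q))
            (\col_i ((val (xi (widen_ord le i)))%:R : 'Z_a)) =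
          topv le (\col_(i < N) ((val (xi i))%:R : 'Z_q)).
  by apply/matrixP => i j; rewrite !mxE redZ_natr.
rewrite -map_trmx Ev; congr block_mx.
apply/matrixP => i j; rewrite (ord1 i) (ord1 j) !mxE eqxx !mulr1n.
exact: redZ_natr.
Qed.

Unset Implicit Arguments.
Theorem mainTheorem7 (a n1 n2 : nat) (M : 'M[int]_n1) (M' : 'M[int]_n2) :
  (2 <= a)%N -> (1 <= n1)%N -> (1 <= n2)%N ->
  symmx M -> symmx M' ->
  cokEquiv (redI a M) (redI a M') ->
  forall (m : nat) (T : 'M['Z_a]_m), symmx T ->
    #|[pred w : 'I_a * {ffun 'I_(maxn n1 n2) -> 'I_a} |
        pb (cokEquiv (bordered (leq_maxl n1 n2) M w.1 w.2) T)]|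
    = #|[pred w : 'I_a * {ffun 'I_(maxn n1 n2) -> 'I_a} |
        pb (cokEquiv (bordered (leq_maxr n1 n2) M' w.1 w.2) T)]|.
Proof.
move=> a1 _ _ _ _ hyp m T _.
set N := maxn n1 n2.
set le1 := leq_maxl n1 n2; set le2 := leq_maxr n1 n2.
have q1 p : p \in primes a -> (1 < a`_p)%N by move=> pa; rewrite p_part_gt1.
have qa (p : nat) : (a`_p %| a)%N by exact: dvdn_part.
pose EM (p : nat) (s : 'Z_(a`_p) * 'cV['Z_(a`_p)]_N) :=
  pb (Rel (Bd (redZ (a`_p) (redI a M)) (topv le1 s.2) s.1) (redZ (a`_p) T)).
pose EM' (p : nat) (s : 'Z_(a`_p) * 'cV['Z_(a`_p)]_N) :=
  pb (Rel (Bd (redZ (a`_p) (redI a M')) (topv le2 s.2) s.1) (redZ (a`_p) T)).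
pose psi (p : nat) := bijc (EM p) (EM' p).
pose pi (p : nat) (w : 'I_a * {ffun 'I_N -> 'I_a}) : 'Z_(a`_p) * 'cV['Z_(a`_p)]_N :=
  ((val w.1)%:R, \col_(i < N) (val (w.2 i))%:R).
pose Phi (w : 'I_a * {ffun 'I_N -> 'I_a}) : 'I_a * {ffun 'I_N -> 'I_a} :=
  (crt a1 (fun p => (psi p (pi p w)).1),
   [ffun i => crt a1 (fun p => (psi p (pi p w)).2 i 0)]).
have c1 p : p \in primes a -> #|EM p| = #|EM' p|.
  move=> pa.
  have r : Rel (redZ (a`_p) (redI a M)) (redZ (a`_p) (redI a M')).
    exact/conv_prime/hyp.
  have := count_prime (redZ (a`_p) T) le1 le2 r.
  have E1 : #|[set s | EM p s]| = #|EM p| by apply: eq_card => x; rewrite inE.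
  have E2 : #|[set s | EM' p s]| = #|EM' p| by apply: eq_card => x; rewrite inE.
  by rewrite -E1 -E2.
have c3 p w : p \in primes a -> pi p (Phi w) = psi p (pi p w).
  move=> pa; rewrite /pi /Phi /=; rewrite crtE //.
  case E: (psi p _) => [z v]; congr pair.
  apply/matrixP => i j; rewrite mxE ffunE (ord1 j) crtE // E.
  by [].
have c4 : injective Phi.
  move=> w1 w2 E.
  have h p : p \in primes a -> pi p w1 = pi p w2.
    move=> pa; apply: (bijc_inj (c1 p pa)); have := congr1 (pi p) E; by rewrite !c3.
  case: w1 w2 E h => [z1 x1] [z2 x2] _ h.
  congr pair.
  - apply: val_inj; apply: (crt_uniq a1 (ltn_ord z1) (ltn_ord z2)) => p pa.
    have := congr1 fst (h p pa); rewrite /pi /= => /ZpnatE; apply; exact: q1.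
  - apply/ffunP => i; apply: val_inj; apply: (crt_uniq a1 (ltn_ord (x1 i)) (ltn_ord (x2 i))) => p pa.
    have := congr1 (fun s : 'Z_(a`_p) * 'cV['Z_(a`_p)]_N => s.2 i 0) (h p pa); rewrite /pi /= !mxE => /ZpnatE.
    apply; exact: q1.
have c5 w : pb (cokEquiv (bordered le1 M w.1 w.2) T) =
            pb (cokEquiv (bordered le2 M' (Phi w).1 (Phi w).2) T).
  apply: pb_eq; split => H p pa; apply/conv_prime; have := H p pa => /conv_prime.
  - rewrite !red_bordered //; try exact: q1.
    move=> R1; apply/pbP.
    change (EM' p (pi p (Phi w))); rewrite c3 // /psi (bijc_pred (c1 p pa)).
    by apply/pbP.
  - rewrite !red_bordered //; try exact: q1.
    move=> R1.
    have : EM' p (pi p (Phi w)) by apply/pbP.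
    by rewrite c3 // /psi (bijc_pred (c1 p pa)) => /pbP.
rewrite (eq_card (B := [pred w | pb (cokEquiv (bordered le2 M' (Phi w).1 (Phi w).2) T)])).
  exact: (card_inj_pre (fun w => pb (cokEquiv (bordered le2 M' w.1 w.2) T)) c4).
by move=> w; rewrite !inE c5.
Qed.
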